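(* Let $b\ge 1$ be an integer and let $a_1<a_2<\dots<a_l$ be integers such that $a_{i+1}-a_i\le b$ for all $1\le i<l$. Set $A=\{a_1,a_2,\dots,a_l\}$. Then for every integer $n>2b^2$, \[ nA=(n-2b^2)\{a_1,a_l\}+2b^2A. \]
   Context: For a subset $A$ of an abelian group and a positive integer $n$, $nA=A+A+\dots+A$ ($n$ summands) denotes the $n$-fold sumset $\{c_1+\dots+c_n : c_i\in A\}$ (repetitions allowed); sums of sets are Minkowski sums $X+Y=\{x+y: x\in X, y\in Y\}$. *)

(* Defs.v *)
From Stdlib Require Import ZArith List Lia.
Import ListNotations.
Open Scope Z_scope.

Definition sumset (n : nat) (A : Z -> Prop) : Z -> Prop :=
  fun x => exists s : list Z,
    length s = n /\ Forall A s /\ fold_right Z.add 0 s = x.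

Definition msum (X Y : Z -> Prop) : Z -> Prop :=
  fun x => exists y z, X y /\ Y z /\ x = y + z.

Definition setOf (a : list Z) : Z -> Prop := fun x => In x a.

(* Main.v *)
Require Import Defs.
From Stdlib Require Import ZArith List Lia Permutation Sorting.Mergesort Sorting.Sorted Orders.
Import ListNotations.
Open Scope Z_scope.

Module ZLeB <: TotalLeBool.
Definition t := Z. Definition leb := Z.leb.
Theorem leb_total : forall x y, leb x y = true \/ leb y x = true.
Proof. intros x y; unfold leb; destruct (Z.leb_spec x y); lia. Qed.
End ZLeB.
Module ZSort := Sort ZLeB.

Definition lsum (l : list Z) : Z := fold_right Z.add 0 l.
Definition mu (m M : Z) (l : list Z) : Z :=
  fold_right (fun x acc => (x - m) * (M - x) + acc) 0 l.

Lemma lsum_app l1 l2 : lsum (l1 ++ l2) = lsum l1 + lsum l2.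
Proof. induction l1; simpl; [lia|]. unfold lsum in *; simpl; lia. Qed.

Lemma mu_app m M l1 l2 : mu m M (l1 ++ l2) = mu m M l1 + mu m M l2.
Proof. induction l1; simpl; [lia|]. unfold mu in *; simpl; lia. Qed.

Lemma lsum_perm l1 l2 : Permutation l1 l2 -> lsum l1 = lsum l2.
Proof. induction 1; unfold lsum in *; simpl; lia. Qed.

Lemma mu_perm m M l1 l2 : Permutation l1 l2 -> mu m M l1 = mu m M l2.
Proof. induction 1; unfold mu in *; simpl; lia. Qed.

Lemma lsum_shift c l : lsum (map (fun x => x + c) l) = lsum l + c * Z.of_nat (length l).
Proof. induction l; cbn [map length fold_right]; [unfold mu, lsum; simpl; ring|]. unfold lsum in *; cbn [map length fold_right]. rewrite IHl, Nat2Z.inj_succ. lia. Qed.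

Lemma mu_shift m M c l : mu m M (map (fun x => x + c) l) =
  mu m M l + c * (M + m) * Z.of_nat (length l) - 2 * c * lsum l - c * c * Z.of_nat (length l).
Proof. induction l; cbn [map length fold_right]; [unfold mu, lsum; simpl; ring|]. unfold mu, lsum in *.
  cbn [map length fold_right]. rewrite IHl, Nat2Z.inj_succ. ring. Qed.

Lemma lsum_le_bound t l : Forall (fun x => x <= t) l -> lsum l <= Z.of_nat (length l) * t.
Proof. induction 1; unfold lsum in *; cbn [length fold_right]; rewrite ?Nat2Z.inj_succ; lia. Qed.
Lemma lsum_ge_bound t l : Forall (fun x => t <= x) l -> Z.of_nat (length l) * t <= lsum l.
Proof. induction 1; unfold lsum in *; cbn [length fold_right]; rewrite ?Nat2Z.inj_succ; lia. Qed.

Lemma Forall_perm {P : Z -> Prop} l1 l2 : Permutation l1 l2 -> Forall P l1 -> Forall P l2.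
Proof. intros H1 H2. exact (Permutation_Forall H1 H2). Qed.

Lemma SS_app (R : Z -> Z -> Prop) l1 l2 : StronglySorted R (l1 ++ l2) ->
  forall x y, In x l1 -> In y l2 -> R x y.
Proof.
  induction l1; simpl; intros H x y Hx Hy; [contradiction|].
  apply StronglySorted_inv in H as [H1 H2].
  destruct Hx as [<-|Hx].
  - rewrite Forall_forall in H2. apply H2, in_or_app; auto.
  - eauto.
Qed.

Lemma split_dec (P : Z -> Prop) (Pdec : forall x, {P x} + {~ P x}) l :
  exists l1 l2, Permutation l (l1 ++ l2) /\ Forall P l1 /\ Forall (fun x => ~ P x) l2.
Proof.
  induction l as [|x l IH]. { exists [], []; simpl; auto. }
  destruct IH as (l1 & l2 & Hp & H1 & H2).
  destruct (Pdec x).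
  - exists (x :: l1), l2; simpl; auto.
  - exists l1, (x :: l2); repeat split; auto.
    apply Permutation_trans with (x :: l1 ++ l2); auto. apply Permutation_middle.
Qed.

Lemma pigeon (R : Z -> Z -> Prop) (Rdec : forall x g, {R x g} + {~ R x g}) (ka : nat) :
  forall (c : nat) (lo : Z) (l : list Z),
  (forall x, In x l -> exists g, lo <= g < lo + Z.of_nat c /\ R x g) ->
  (length l >= c * ka + 1)%nat ->
  exists g P Rest, lo <= g < lo + Z.of_nat c /\ Permutation l (P ++ Rest) /\
    length P = S ka /\ Forall (fun x => R x g) P.
Proof.
  induction c as [|c IH]; intros lo l Hl Hlen.
  - destruct l as [|x l]; simpl in Hlen; [lia|].
    destruct (Hl x (or_introl eq_refl)) as (g & Hg & _). lia.
  - set (top := lo + Z.of_nat c).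
    destruct (split_dec (fun x => R x top) (fun x => Rdec x top) l) as (l1 & l2 & Hp & H1 & H2).
    pose proof (Permutation_length Hp) as Hpl. rewrite length_app in Hpl.
    destruct (le_lt_dec (S ka) (length l1)) as [Hk|Hk].
    + exists top, (firstn (S ka) l1), (skipn (S ka) l1 ++ l2).
      split; [lia|]. split.
      { rewrite app_assoc, firstn_skipn. exact Hp. }
      split. { rewrite length_firstn. lia. }
      rewrite <- (firstn_skipn (S ka) l1) in H1. apply Forall_app in H1. tauto.
    + destruct (IH lo l2) as (g & P & Rest & Hg & Hp2 & HlP & HF).
      * intros x Hx. destruct (Hl x) as (g & Hg & HR).
        { apply (Permutation_in x (Permutation_sym Hp)). apply in_or_app; auto. }
        exists g. split; auto.
        rewrite Forall_forall in H2. specialize (H2 x Hx).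
        assert (g <> top) by (intro; subst; contradiction). unfold top in *. lia.
      * nia.
      * exists g, P, (l1 ++ Rest). split; [lia|]. split; auto.
        apply Permutation_trans with (l1 ++ l2); auto.
        apply Permutation_trans with (l1 ++ P ++ Rest). { apply Permutation_app_head; auto. }
        rewrite !app_assoc. apply Permutation_app_tail. apply Permutation_app_comm.
Qed.
Definition mid (a : list Z) (m M x : Z) : Prop := In x a /\ m < x < M.

Lemma in_firstn (k : nat) (l : list Z) x : In x (firstn k l) -> In x l.
Proof. intro H; rewrite <- (firstn_skipn k l); apply in_or_app; left; exact H. Qed.
Lemma in_skipn (k : nat) (l : list Z) x : In x (skipn k l) -> In x l.
Proof. intro H; rewrite <- (firstn_skipn k l); apply in_or_app; right; exact H. Qed.

Lemma exchange a m M bn (Hbn : (1 <= bn)%nat)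
 (Hdown : forall x, In x a -> m < x -> exists g, 1 <= g <= Z.of_nat bn /\ In (x - g) a)
 (Hup : forall x, In x a -> x < M -> exists h, 1 <= h <= Z.of_nat bn /\ In (x + h) a)
 w : Forall (mid a m M) w -> (length w >= 2*(bn*bn) + 1)%nat ->
 exists w1, Forall (fun x => In x a) w1 /\ length w1 = length w /\ lsum w1 = lsum w
   /\ mu m M w1 < mu m M w.
Proof.
  intros Hw Hlen.
  pose proof (ZSort.Permuted_sort w) as Hp.
  assert (Hss : StronglySorted (fun x y => is_true (x <=? y)) (ZSort.sort w)).
  { apply ZSort.StronglySorted_sort. intros x y z; unfold is_true; rewrite !Z.leb_le; lia. }
  set (ws := ZSort.sort w) in *.
  assert (Hmid : Forall (mid a m M) ws) by (eapply Forall_perm; eauto).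
  pose proof (Permutation_length Hp) as Hpl.
  set (lo := firstn (bn*bn) ws).
  assert (Hws : ws = lo ++ skipn (bn*bn) ws) by (symmetry; apply firstn_skipn).
  assert (Hlo : length lo = (bn*bn)%nat) by (unfold lo; rewrite length_firstn; lia).
  assert (Hhi : (length (skipn (bn*bn) ws) >= bn*bn + 1)%nat) by (rewrite length_skipn; lia).
  destruct (skipn (bn*bn) ws) as [|t hi'] eqn:Ehi; [simpl in Hhi; lia|].
  set (hi := t :: hi') in *.
  rewrite Forall_forall in Hmid.
  assert (Hlomid : forall x, In x lo -> mid a m M x)
    by (intros x Hx; apply Hmid; rewrite Hws; apply in_or_app; auto).
  assert (Hhimid : forall x, In x hi -> mid a m M x)
    by (intros x Hx; apply Hmid; rewrite Hws; apply in_or_app; auto).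
  destruct (pigeon (fun x g => In (x - g) a) (fun x g => in_dec Z.eq_dec (x - g) a)
             (bn - 1) bn 1 lo) as (g0 & P & R1 & Hg0 & HpP & HlP & HFP).
  { intros x Hx. destruct (Hlomid x Hx) as [Ha Hr].
    destruct (Hdown x Ha) as (g & Hg & Hga); [lia|]. exists g; split; auto; lia. }
  { nia. }
  destruct (pigeon (fun x h => In (x + h) a) (fun x h => in_dec Z.eq_dec (x + h) a)
             (bn - 1) bn 1 hi) as (h0 & Q & R2 & Hh0 & HpQ & HlQ & HFQ).
  { intros x Hx. destruct (Hhimid x Hx) as [Ha Hr].
    destruct (Hup x Ha) as (g & Hg & Hga); [lia|]. exists g; split; auto; lia. }
  { simpl in Hhi |- *. nia. }
  set (P1 := firstn (Z.to_nat h0) P). set (P2 := skipn (Z.to_nat h0) P).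
  set (Q1 := firstn (Z.to_nat g0) Q). set (Q2 := skipn (Z.to_nat g0) Q).
  assert (HlP1 : length P1 = Z.to_nat h0) by (unfold P1; rewrite length_firstn; lia).
  assert (HlQ1 : length Q1 = Z.to_nat g0) by (unfold Q1; rewrite length_firstn; lia).
  assert (HW0 : Permutation w ((P1 ++ P2 ++ R1) ++ (Q1 ++ Q2 ++ R2))).
  { apply Permutation_trans with ws; auto. rewrite Hws.
    apply Permutation_app.
    - rewrite app_assoc. unfold P1, P2. rewrite firstn_skipn. exact HpP.
    - rewrite app_assoc. unfold Q1, Q2. rewrite firstn_skipn. exact HpQ. }
  assert (HP1t : Forall (fun x => x <= t) P1).
  { apply Forall_forall. intros x Hx.
    assert (Hxlo : In x lo).
    { apply (Permutation_in x (Permutation_sym HpP)). apply in_or_app; left.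
      eapply in_firstn; exact Hx. }
    rewrite Hws in Hss. pose proof (SS_app _ _ _ Hss x t Hxlo (or_introl eq_refl)) as H.
    unfold is_true in H. rewrite Z.leb_le in H. exact H. }
  assert (HQ1t : Forall (fun y => t <= y) Q1).
  { apply Forall_forall. intros y Hy.
    assert (Hyhi : In y hi).
    { apply (Permutation_in y (Permutation_sym HpQ)). apply in_or_app; left.
      eapply in_firstn; exact Hy. }
    destruct Hyhi as [<-|Hy']; [lia|].
    rewrite Hws in Hss. unfold hi in Hss.
    replace (lo ++ t :: hi') with ((lo ++ [t]) ++ hi') in Hss by (rewrite <- app_assoc; reflexivity).
    assert (Ht : In t (lo ++ [t])) by (apply in_or_app; right; left; reflexivity).
    pose proof (SS_app _ _ _ Hss t y Ht Hy') as H.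
    unfold is_true in H. rewrite Z.leb_le in H. exact H. }
  exists (map (fun x => x + - g0) P1 ++ P2 ++ R1 ++ map (fun x => x + h0) Q1 ++ Q2 ++ R2).
  assert (HinW0 : forall x, In x ((P1 ++ P2 ++ R1) ++ (Q1 ++ Q2 ++ R2)) -> In x a).
  { intros x Hx. apply (Permutation_in x (Permutation_sym HW0)) in Hx.
    apply Hmid. apply (Permutation_in x Hp). exact Hx. }
  split; [|split; [|split]].
  - apply Forall_forall. intros x Hx.
    repeat (apply in_app_or in Hx; destruct Hx as [Hx|Hx]).
    + apply in_map_iff in Hx as (y & <- & Hy).
      rewrite Forall_forall in HFP. replace (y + - g0) with (y - g0) by lia.
      apply HFP. eapply in_firstn; exact Hy.
    + apply HinW0. rewrite !in_app_iff; tauto.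
    + apply HinW0. rewrite !in_app_iff; tauto.
    + apply in_map_iff in Hx as (y & <- & Hy).
      rewrite Forall_forall in HFQ. apply HFQ. eapply in_firstn; exact Hy.
    + apply HinW0. rewrite !in_app_iff; tauto.
    + apply HinW0. rewrite !in_app_iff; tauto.
  - rewrite (Permutation_length HW0). rewrite !length_app, !length_map. lia.
  - rewrite (lsum_perm _ _ HW0). rewrite !lsum_app, !lsum_shift. rewrite HlP1, HlQ1.
    rewrite !Z2Nat.id by lia. ring.
  - rewrite (mu_perm _ _ _ _ HW0). rewrite !mu_app, !mu_shift. rewrite HlP1, HlQ1.
    rewrite !Z2Nat.id by lia.
    apply lsum_le_bound in HP1t. apply lsum_ge_bound in HQ1t.
    rewrite HlP1, Z2Nat.id in HP1t by lia. rewrite HlQ1, Z2Nat.id in HQ1t by lia.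
    assert (g0 * lsum P1 <= g0 * (h0 * t)) by (apply Z.mul_le_mono_nonneg_l; lia).
    assert (h0 * (g0 * t) <= h0 * lsum Q1) by (apply Z.mul_le_mono_nonneg_l; lia).
    assert (0 < g0 * h0 * (g0 + h0)) by (apply Z.mul_pos_pos; [apply Z.mul_pos_pos|]; lia).
    nia.
Qed.
Lemma mu_nonneg a m M l : Forall (mid a m M) l -> 0 <= mu m M l.
Proof. induction 1 as [|x l [_ Hx] _ IH]; unfold mu in *; simpl; [lia|].
  assert (0 <= (x - m) * (M - x)) by (apply Z.mul_nonneg_nonneg; lia). lia. Qed.

Lemma mu_ext m M l : Forall (fun x => x = m \/ x = M) l -> mu m M l = 0.
Proof. induction 1 as [|x l Hx _ IH]; unfold mu in *; simpl; [lia|].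
  destruct Hx as [->| ->]; rewrite IH; ring. Qed.

Lemma core a m M bn (Hbn : (1 <= bn)%nat)
 (Hrange : forall x, In x a -> m <= x <= M)
 (Hdown : forall x, In x a -> m < x -> exists g, 1 <= g <= Z.of_nat bn /\ In (x - g) a)
 (Hup : forall x, In x a -> x < M -> exists h, 1 <= h <= Z.of_nat bn /\ In (x + h) a) :
 forall k w, (Z.to_nat (mu m M w) < k)%nat -> Forall (mid a m M) w ->
 exists e w', (length e + length w' = length w)%nat /\ lsum e + lsum w' = lsum w /\
   (length w' <= 2*(bn*bn))%nat /\ Forall (fun x => x = m \/ x = M) e /\ Forall (mid a m M) w'.
Proof.
  induction k as [|k IH]; intros w Hk Hw; [lia|].
  destruct (le_lt_dec (length w) (2*(bn*bn))) as [Hs|Hs].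
  { exists [], w. simpl. repeat split; auto. }
  destruct (exchange a m M bn Hbn Hdown Hup w Hw ltac:(lia)) as (w1 & HA & Hl & Hsum & Hmu).
  destruct (split_dec (fun x => x = m \/ x = M)
     (fun x => match Z.eq_dec x m with left h => left (or_introl h) | right h1 =>
        match Z.eq_dec x M with left h => left (or_intror h) | right h2 =>
          right (fun H => match H with or_introl e => h1 e | or_intror e => h2 e end) end end) w1)
    as (e1 & w1m & Hp & He & Hn).
  assert (Hmid1 : Forall (mid a m M) w1m).
  { apply Forall_forall. intros x Hx. rewrite Forall_forall in Hn, HA.
    assert (In x a). { apply HA. apply (Permutation_in x (Permutation_sym Hp)).
      apply in_or_app; auto. }
    specialize (Hn x Hx). specialize (Hrange x H). split; auto. lia. }
  assert (Hmu1 : mu m M w1 = mu m M w1m).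
  { rewrite (mu_perm _ _ _ _ Hp), mu_app, (mu_ext _ _ _ He). ring. }
  pose proof (mu_nonneg _ _ _ _ Hmid1). pose proof (mu_nonneg _ _ _ _ Hw).
  destruct (IH w1m) as (e2 & w' & H1 & H2 & H3 & H4 & H5); auto.
  { apply Nat2Z.inj_lt. rewrite !Z2Nat.id by lia.
    apply Nat2Z.inj_lt in Hk. rewrite Z2Nat.id in Hk by lia. lia. }
  exists (e1 ++ e2), w'. pose proof (Permutation_length Hp) as Hpl.
  rewrite length_app in *. repeat split; auto.
  - lia.
  - rewrite lsum_app. rewrite (lsum_perm _ _ Hp), lsum_app in Hsum. lia.
  - apply Forall_app; auto.
Qed.
Lemma nth_mono (a : list Z) (Hs : forall i : nat, (S i < length a)%nat -> nth i a 0 < nth (S i) a 0) :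
  forall d i, (i + d < length a)%nat -> nth i a 0 <= nth (i + d) a 0.
Proof.
  induction d; intros i Hi. { rewrite Nat.add_0_r. lia. }
  specialize (IHd i ltac:(lia)). specialize (Hs (i + d)%nat ltac:(lia)).
  replace (i + S d)%nat with (S (i + d)) by lia. lia.
Qed.

Theorem mainTheorem1 (b : Z) (a : list Z) (n : nat) :
  1 <= b ->
  (1 <= length a)%nat ->
  (forall i : nat, (S i < length a)%nat ->
     nth i a 0 < nth (S i) a 0 /\ nth (S i) a 0 - nth i a 0 <= b) ->
  Z.of_nat n > 2 * b ^ 2 ->
  forall x : Z,
    sumset n (setOf a) x <->
    msum (sumset (n - Z.to_nat (2 * b ^ 2))
                 (setOf [nth 0 a 0; nth (length a - 1) a 0]))
         (sumset (Z.to_nat (2 * b ^ 2)) (setOf a)) x.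
Proof.
  intros Hb Hla Hs Hn x.
  set (m := nth 0 a 0). set (M := nth (length a - 1) a 0).
  set (bn := Z.to_nat b).
  assert (Hbb : b = Z.of_nat bn) by (unfold bn; rewrite Z2Nat.id; lia).
  assert (HN : Z.to_nat (2 * b ^ 2) = (2 * (bn * bn))%nat).
  { apply Nat2Z.inj. rewrite Z2Nat.id by nia. rewrite Z.pow_2_r, Hbb. lia. }
  rewrite HN. clear HN.
  assert (HnN : (2 * (bn * bn) < n)%nat).
  { apply Nat2Z.inj_lt. rewrite Z.pow_2_r, Hbb in Hn. lia. }
  assert (Hbn : (1 <= bn)%nat) by lia.
  assert (Hmono : forall i j, (i <= j < length a)%nat -> nth i a 0 <= nth j a 0).
  { intros i j Hij. replace j with (i + (j - i))%nat by lia.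
    apply nth_mono; [intros k Hk; apply Hs; auto | lia]. }
  assert (Hm : In m a) by (apply nth_In; lia).
  assert (HM : In M a) by (apply nth_In; lia).
  assert (Hrange : forall y, In y a -> m <= y <= M).
  { intros y Hy. apply In_nth with (d := 0) in Hy as (i & Hi & <-).
    split; apply Hmono; lia. }
  assert (Hdown : forall y, In y a -> m < y -> exists g, 1 <= g <= Z.of_nat bn /\ In (y - g) a).
  { intros y Hy Hmy. apply In_nth with (d := 0) in Hy as (i & Hi & <-).
    destruct i as [|j]; [unfold m in Hmy; lia|].
    destruct (Hs j Hi). exists (nth (S j) a 0 - nth j a 0). split; [lia|].
    replace (nth (S j) a 0 - (nth (S j) a 0 - nth j a 0)) with (nth j a 0) by ring.
    apply nth_In; lia. }
  assert (Hup : forall y, In y a -> y < M -> exists h, 1 <= h <= Z.of_nat bn /\ In (y + h) a).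
  { intros y Hy HyM. apply In_nth with (d := 0) in Hy as (i & Hi & <-).
    assert (Hi' : (S i < length a)%nat).
    { destruct (Nat.eq_dec i (length a - 1)) as [E|E]; [unfold M in HyM; rewrite E in HyM; lia|lia]. }
    destruct (Hs i Hi'). exists (nth (S i) a 0 - nth i a 0). split; [lia|].
    replace (nth i a 0 + (nth (S i) a 0 - nth i a 0)) with (nth (S i) a 0) by ring.
    apply nth_In; lia. }
  split.
  - intros (s & Hl & HF & Hsum).
    destruct (split_dec (fun y => y = m \/ y = M)
     (fun y => match Z.eq_dec y m with left h => left (or_introl h) | right h1 =>
        match Z.eq_dec y M with left h => left (or_intror h) | right h2 =>
          right (fun H => match H with or_introl e => h1 e | or_intror e => h2 e end) end end) s)
      as (e & w & Hp & He & Hw).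
    assert (Hwm : Forall (mid a m M) w).
    { apply Forall_forall. intros y Hy. rewrite Forall_forall in Hw, HF.
      assert (In y a). { apply HF. apply (Permutation_in y (Permutation_sym Hp)).
        apply in_or_app; auto. }
      specialize (Hw y Hy). specialize (Hrange y H). split; auto. lia. }
    destruct (core a m M bn Hbn Hrange Hdown Hup (S (Z.to_nat (mu m M w))) w ltac:(lia) Hwm)
      as (e' & w' & H1 & H2 & H3 & H4 & H5).
    pose proof (Permutation_length Hp) as Hpl. rewrite length_app in Hpl.
    set (E := e ++ e').
    assert (HE : Forall (fun y => y = m \/ y = M) E) by (apply Forall_app; auto).
    assert (HlE : (length E + length w' = n)%nat) by (unfold E; rewrite length_app; lia).
    exists (lsum (firstn (n - 2*(bn*bn)) E)), (lsum (skipn (n - 2*(bn*bn)) E ++ w')).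
    rewrite <- (firstn_skipn (n - 2*(bn*bn)) E) in HE. apply Forall_app in HE as [HE1 HE2].
    split; [|split].
    + exists (firstn (n - 2*(bn*bn)) E). split; [rewrite length_firstn; lia|]. split; [|reflexivity].
      eapply Forall_impl; [|exact HE1]. intros y [->| ->]; unfold setOf; simpl; auto.
    + exists (skipn (n - 2*(bn*bn)) E ++ w'). split; [rewrite length_app, length_skipn; lia|].
      split; [|reflexivity]. apply Forall_app; split.
      * eapply Forall_impl; [|exact HE2]. intros y [->| ->]; unfold setOf; auto.
      * eapply Forall_impl; [|exact H5]. intros y [Hy _]; exact Hy.
    + rewrite lsum_app.
      assert (HEs : lsum E = lsum (firstn (n - 2*(bn*bn)) E) + lsum (skipn (n - 2*(bn*bn)) E))
        by (rewrite <- lsum_app, firstn_skipn; reflexivity).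
      unfold E in HEs. rewrite lsum_app in HEs. rewrite <- Hsum.
      change (fold_right Z.add 0 s) with (lsum s). rewrite (lsum_perm _ _ Hp), lsum_app. fold E in HEs. lia.
  - intros (y & z & (s1 & Hl1 & HF1 & Hs1) & (s2 & Hl2 & HF2 & Hs2) & ->).
    exists (s1 ++ s2). split; [rewrite length_app; lia|]. split.
    + apply Forall_app; split; auto.
      eapply Forall_impl; [|exact HF1]. intros y' Hy'. unfold setOf in *.
      simpl in Hy'. destruct Hy' as [<-|[<-|[]]]; auto.
    + change (lsum (s1 ++ s2) = y + z). rewrite lsum_app. unfold lsum. lia.
Qed.
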